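(* Let $m$, $c$, $d$ be positive integers with $m-2c-1>0$. Let $\mathbf{w}_{c+1},\dots,\mathbf{w}_m\in\mathbb{R}^d$ (the benign local models), let $\mathbf{w}_{Re}\in\mathbb{R}^d$, and let $\mathbf{s}\in\{-1,1\}^d$. Consider the optimization problem over $\lambda>0$: $$\max_{\lambda}\ \lambda \quad\text{subject to}\quad \mathbf{w}_1'=\mathrm{Krum}(\mathbf{w}_1',\dots,\mathbf{w}_c',\mathbf{w}_{c+1},\dots,\mathbf{w}_m),\quad \mathbf{w}_1'=\mathbf{w}_{Re}-\lambda\mathbf{s},\quad \mathbf{w}_i'=\mathbf{w}_1' \text{ for } i=2,\dots,c,$$ where the first constraint means that Krum, applied to these $m$ vectors with parameter $c$, selects $\mathbf{w}_1'$. Suppose $\lambda$ is a solution to this optimization problem. Then $$\lambda\le\sqrt{\frac{1}{(m-2c-1)d}\cdot\min_{c+1\le i\le m}\sum_{l\in\tilde{\Gamma}_{\mathbf{w}_i}^{m-c-2}}D^2(\mathbf{w}_l,\mathbf{w}_i)}\;+\;\frac{1}{\sqrt{d}}\cdot\max_{c+1\le i\le m}D(\mathbf{w}_i,\mathbf{w}_{Re}),$$ where $D(\cdot,\cdot)$ is Euclidean distance and $\tilde{\Gamma}_{\mathbf{w}_i}^{m-c-2}$ is the set of (indices of) the $m-c-2$ benign local models among $\mathbf{w}_{c+1},\dots,\mathbf{w}_m$, other than $\mathbf{w}_i$ itself, that have the smallest Euclidean distance to $\mathbf{w}_i$.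
   Context: Krum aggregation rule with parameter $c$ (an assumed upper bound on the number of compromised devices): given $m$ local models $\mathbf{v}_1,\dots,\mathbf{v}_m\in\mathbb{R}^d$, for each $\mathbf{v}_i$ compute the $m-c-2$ local models among the others that are closest to $\mathbf{v}_i$ in Euclidean distance, and let the score of $\mathbf{v}_i$ be the sum of the squared Euclidean distances from $\mathbf{v}_i$ to these $m-c-2$ models. Krum outputs (selects) a local model with the smallest score. In the setting, $\mathbf{w}_1',\dots,\mathbf{w}_c'$ are the crafted local models of the $c$ compromised devices and $d$ is the number of model parameters. *)

(* Defs.v *)
From mathcomp Require Import all_boot all_order all_algebra.
From mathcomp Require Import reals.
Set Implicit Arguments. Unset Strict Implicit. Unset Printing Implicit Defensive.
Import Order.TTheory GRing.Theory Num.Theory.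
Local Open Scope ring_scope.

Section KrumDefs.
Variable R : realType.

Definition edist (d : nat) (x y : 'rV[R]_d) : R :=
  Num.sqrt (\sum_(k < d) (x 0 k - y 0 k) ^+ 2).

Definition sum_smallest (k : nat) (s : seq R) : R :=
  \sum_(x <- take k (sort (fun a b : R => a <= b) s)) x.

Definition seqmin (s : seq R) : R := \big[Num.min/head 0 s]_(x <- s) x.
Definition seqmax (s : seq R) : R := \big[Num.max/head 0 s]_(x <- s) x.

Definition krum_score (m c d : nat) (v : 'I_m -> 'rV[R]_d) (i : 'I_m) : R :=
  sum_smallest (m - c - 2)
    [seq edist (v i) (v j) ^+ 2 | j <- [seq j <- enum 'I_m | j != i]].

Definition krum_selects (m c d : nat) (v : 'I_m -> 'rV[R]_d) (i : 'I_m) : Prop :=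
  forall j : 'I_m, krum_score c v i <= krum_score c v j.

(* The m local models: indices 0..c-1 (paper: 1..c) are the crafted models
   w'_1 = ... = w'_c = wRe - lambda s; indices c..m-1 (paper: c+1..m) are the
   benign models w_i. The values of w at indices < c are irrelevant. *)
Definition attacked_models (m c d : nat) (w : 'I_m -> 'rV[R]_d)
  (wRe s : 'rV[R]_d) (lam : R) : 'I_m -> 'rV[R]_d :=
  fun i => if (i < c)%N then wRe - lam *: s else w i.

Definition krum_feasible (m c d : nat) (w : 'I_m -> 'rV[R]_d)
  (wRe s : 'rV[R]_d) (lam : R) : Prop :=
  0 < lam /\
  forall i1 : 'I_m, nat_of_ord i1 = 0%N ->
    krum_selects c (attacked_models c w wRe s lam) i1.

Definition krum_opt_solution (m c d : nat) (w : 'I_m -> 'rV[R]_d)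
  (wRe s : 'rV[R]_d) (lam : R) : Prop :=
  krum_feasible c w wRe s lam /\
  forall lam', krum_feasible c w wRe s lam' -> lam' <= lam.

Definition benign (m c : nat) : seq 'I_m := [seq i <- enum 'I_m | (c <= nat_of_ord i)%N].

Definition benign_nbr_sum (m c d : nat) (w : 'I_m -> 'rV[R]_d) (i : 'I_m) : R :=
  sum_smallest (m - c - 2)
    [seq edist (w l) (w i) ^+ 2 | l <- [seq l <- benign m c | l != i]].

End KrumDefs.

(* Main.v *)
Require Import Defs.
From mathcomp Require Import all_boot all_order all_algebra.
From mathcomp Require Import reals.
From mathcomp Require Import ring lra zify.
Import Order.TTheory GRing.Theory Num.Theory.
Local Open Scope ring_scope.

Section Helpers.
Variable R : realType.

Let leR := (fun a b : R => a <= b).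

Lemma sorted_take_le (s u : seq R) : sorted leR s -> subseq u s ->
  \sum_(x <- take (size u) s) x <= \sum_(x <- u) x.
Proof.
elim: s u => [|x s IH] u /= Hs Hsub.
  by case: u Hsub => // _; rewrite big_nil.
case: u Hsub => [|y u] Hsub; first by rewrite !big_nil.
have Hs' : sorted leR s by move: Hs; case: (s) => //= ? ? /andP[].
rewrite /= !big_cons.
move: Hsub => /=; case: eqP => [-> Hu|_ Hu].
  by rewrite lerD2l; apply: IH.
have yin : y \in s by apply: (mem_subseq Hu); rewrite inE eqxx.
have xy : x <= y.
  have := order_path_min (@le_trans _ R) Hs.
  by move=> /allP /(_ y yin).
apply: lerD => //; apply: IH => //.
exact: subseq_trans (subseq_cons u y) Hu.
Qed.

Lemma sum_smallest_subseq k (s t : seq R) : subseq t s -> (k <= size t)%N ->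
  sum_smallest k s <= sum_smallest k t.
Proof.
move=> Hts Hk; rewrite /sum_smallest.
set u := take k (sort leR t).
have Hu : size u = k by rewrite size_take size_sort; case: ltngtP Hk => //; lia.
have Hsub : subseq u (sort leR s).
  apply: subseq_trans (take_subseq _ _) _.
  by apply: subseq_sort => //; [exact: le_total | exact: le_trans].
have := @sorted_take_le _ _ (sort_sorted (@le_total _ R) s) Hsub.
by rewrite Hu.
Qed.

Lemma sum_ge0_all (l : seq R) : all (fun x => 0 <= x) l -> 0 <= \sum_(x <- l) x.
Proof. by move=> /allP H; rewrite big_seq; apply: sumr_ge0 => i /H. Qed.

Lemma sum_lb (l : seq R) (a : nat) (b : R) : 0 <= b -> all (fun x => 0 <= x) l ->
  (count (fun x : R => (x < b)%R) l <= a)%N -> ((size l - a)%N)%:R * b <= \sum_(x <- l) x.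
Proof.
move=> b0; elim: l a => [|x l IH] a /=; first by rewrite sub0n mul0r big_nil.
move=> /andP[x0 Hl]; rewrite big_cons.
case: (boolP (x < b)) => xb Hc.
  case: a Hc => [|a] Hc //=.
  rewrite subSS; apply: le_trans (IH a Hl Hc) _.
  by rewrite lerDr.
have := IH a Hl Hc.
case: (leqP a (size l)) => ha.
  rewrite subSn // -addn1 natrD mulrDl mul1r addrC => H.
  by apply: lerD => //; rewrite leNgt.
rewrite (_ : ((size l).+1 - a = 0)%N); last lia.
rewrite mul0r => _; apply: addr_ge0 => //.
exact: sum_ge0_all.
Qed.

Lemma sum_smallest_lb k (s : seq R) (a : nat) (b : R) : 0 <= b ->
  all (fun x => 0 <= x) s -> (count (fun x : R => (x < b)%R) s <= a)%N ->
  (k <= size s)%N -> ((k - a)%N)%:R * b <= sum_smallest k s.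
Proof.
move=> b0 Hs Hc Hk; rewrite /sum_smallest.
have Hsz : size (take k (sort leR s)) = k by rewrite size_take size_sort; case: ltngtP Hk => //; lia.
rewrite -{1}Hsz; apply: sum_lb => //.
  apply/allP => x /mem_take; rewrite mem_sort; exact: (allP Hs).
apply: leq_trans _ Hc.
by rewrite -(count_sort leR _ s); apply: leq_count_subseq; exact: take_subseq.
Qed.

Lemma seqmax_ge (s : seq R) x : x \in s -> x <= seqmax s.
Proof.
rewrite /seqmax; move: (head 0 s) => h.
elim: s => [|y s IH] //; rewrite inE big_cons => /orP[/eqP ->|/IH H].
  by rewrite le_max lexx.
by rewrite le_max H orbT.
Qed.

Lemma bigmin_in (h : R) (t : seq R) : \big[Num.min/h]_(y <- t) y \in h :: t.
Proof.
elim: t => [|y t IH]; first by rewrite big_nil inE eqxx.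
rewrite big_cons; case: leP => _; first by rewrite !inE eqxx orbT.
by move: IH; rewrite !inE => /orP[->|->]; rewrite ?orbT.
Qed.

Lemma seqmin_in (s : seq R) : s != [::] -> seqmin s \in s.
Proof.
rewrite /seqmin; case: s => [//|h s] _ /=.
by have := bigmin_in h (h :: s); rewrite inE => /orP[/eqP ->|//]; rewrite inE eqxx.
Qed.

Lemma CS n (x y : 'I_n -> R) :
  (\sum_i x i * y i) ^+ 2 <= (\sum_i x i ^+ 2) * (\sum_i y i ^+ 2).
Proof.
have H0 : 0 <= \sum_i \sum_j (x i * y j - x j * y i) ^+ 2.
  by apply: sumr_ge0 => i _; apply: sumr_ge0 => j _; exact: sqr_ge0.
have E : \sum_i \sum_j (x i * y j - x j * y i) ^+ 2 =
   ((\sum_i x i ^+ 2) * (\sum_i y i ^+ 2)) *+ 2 - ((\sum_i x i * y i) ^+ 2) *+ 2.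
  transitivity (\sum_i \sum_j ((x i ^+ 2 * y j ^+ 2 + x j ^+ 2 * y i ^+ 2)
                  - 2 * ((x i * y i) * (x j * y j)))).
    by apply: eq_bigr => i _; apply: eq_bigr => j _; ring.
  under eq_bigr => i _ do rewrite sumrB big_split /=.
  rewrite sumrB big_split /=.
  have -> : \sum_i \sum_j x i ^+ 2 * y j ^+ 2 = (\sum_i x i ^+ 2) * (\sum_i y i ^+ 2).
    by rewrite mulr_suml; apply: eq_bigr => i _; rewrite mulr_sumr.
  have -> : \sum_i \sum_j x j ^+ 2 * y i ^+ 2 = (\sum_i x i ^+ 2) * (\sum_i y i ^+ 2).
    by rewrite mulrC mulr_suml; apply: eq_bigr => i _; rewrite mulr_sumr; apply: eq_bigr => j _; rewrite mulrC.
  have -> : \sum_i \sum_j 2 * (x i * y i * (x j * y j)) = 2 * \sum_i (x i * y i * \sum_j x j * y j).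
    by rewrite mulr_sumr; apply: eq_bigr => i _; rewrite !mulr_sumr.
  by rewrite -mulr_suml; ring.
move: H0; rewrite E; lra.
Qed.

Lemma dist_lb d (x y s : 'rV[R]_d) (lam : R) :
  (forall k : 'I_d, s 0 k = 1 \/ s 0 k = -1) -> 0 <= lam ->
  (lam * Num.sqrt d%:R - edist y x) ^+ 2 <= edist (x - lam *: s) y ^+ 2.
Proof.
move=> hs l0.
pose e := fun k : 'I_d => x 0 k - y 0 k.
have Ed : edist (x - lam *: s) y ^+ 2 =
   \sum_k e k ^+ 2 - 2 * lam * \sum_k e k * s 0 k + lam ^+ 2 * d%:R.
  rewrite /edist sqr_sqrtr; last by apply: sumr_ge0 => k _; exact: sqr_ge0.
  transitivity (\sum_k (e k ^+ 2 - 2 * lam * (e k * s 0 k) + lam ^+ 2)).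
    apply: eq_bigr => k _; rewrite !mxE /e; case: (hs k) => ->; ring.
  rewrite big_split sumrB /= -mulr_sumr sumr_const card_ord mulr_natr.
  by [].
have Ey : edist y x = Num.sqrt (\sum_k e k ^+ 2).
  by rewrite /edist; congr Num.sqrt; apply: eq_bigr => k _; rewrite /e; ring.
have Hs2 : \sum_k s 0 k ^+ 2 = d%:R.
  transitivity (\sum_(k < d) (1 : R)).
    by apply: eq_bigr => k _; case: (hs k) => ->; ring.
  by rewrite sumr_const card_ord.
have HCS := @CS d e (fun k => s 0 k).
rewrite Hs2 in HCS.
rewrite Ed Ey.
set E := \sum_k e k ^+ 2 in HCS *.
set S := \sum_k e k * s 0 k in HCS *.
have E0 : 0 <= E by apply: sumr_ge0 => k _; exact: sqr_ge0.
have d0 : (0 : R) <= d%:R by [].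
have Ea := sqr_sqrtr E0.
have dq := sqr_sqrtr d0.
have a0 := sqrtr_ge0 E.
have q0 := sqrtr_ge0 (d%:R : R).
rewrite -Ea -dq in HCS.
have HS : S <= Num.sqrt E * Num.sqrt d%:R.
  have : S ^+ 2 <= (Num.sqrt E * Num.sqrt d%:R) ^+ 2 by rewrite exprMn.
  have : 0 <= Num.sqrt E * Num.sqrt d%:R by apply: mulr_ge0.
  move: (Num.sqrt E * Num.sqrt d%:R) => P; nra.
rewrite -{2}Ea -{2}dq.
move: HS; move: (Num.sqrt E) (Num.sqrt d%:R) a0 q0 => a q a0 q0 HS.
nra.
Qed.

Lemma edistC d (x y : 'rV[R]_d) : edist x y = edist y x.
Proof. by rewrite /edist; congr Num.sqrt; apply: eq_bigr => k _; ring. Qed.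

End Helpers.

Lemma count_ord m (p : pred nat) :
  count (fun j : 'I_m => p (val j)) (enum 'I_m) = count p (iota 0 m).
Proof. by rewrite -val_enum_ord count_map. Qed.

Lemma size_benign_nbr m c (i : 'I_m) : (c <= m)%N ->
  (m - c - 1 <= size [seq l <- benign m c | l != i])%N.
Proof.
move=> cm; rewrite size_filter /benign count_filter.
rewrite (_ : count _ (enum 'I_m) = count (fun n => (n != val i) && (c <= n)%N) (iota 0 m)); last first.
  by rewrite -count_ord; apply: eq_count => j.
move: (val i) => iv.
rewrite -{2}(subnKC cm) iotaD count_cat add0n.
apply: leq_trans (leq_addl _ _).
rewrite (eq_in_count (a2 := predC (pred1 iv))); last first.
  by move=> n; rewrite mem_iota => /andP[-> _]; rewrite andbT.
have := count_predC (pred1 iv) (iota c (m - c)).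
rewrite size_iota.
have : (count (pred1 iv) (iota c (m - c)) <= 1)%N.
  by rewrite (count_uniq_mem _ (iota_uniq _ _)) leq_b1.
lia.
Qed.

Lemma count_crafted m c (i0 : 'I_m) : val i0 = 0%N -> (c <= m)%N ->
  (count (fun j : 'I_m => (val j < c)%N) [seq j <- enum 'I_m | j != i0] <= c - 1)%N.
Proof.
move=> i00 cm; rewrite count_filter.
rewrite (_ : count _ (enum 'I_m) = count (fun n => (n < c)%N && (n != 0%N)) (iota 0 m)); last first.
  by rewrite -count_ord; apply: eq_count => j /=; rewrite -i00.
rewrite -(subnKC cm) iotaD count_cat add0n.
rewrite (eq_in_count (s := iota c (m - c)) (a2 := pred0)); last first.
  by move=> n; rewrite mem_iota => /andP[H _] /=; rewrite ltnNge H.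
rewrite count_pred0 addn0.
case: c {cm} => [|c] //=.
rewrite subSS subn0.
by apply: leq_trans (count_size _ _) _; rewrite size_iota.
Qed.

Lemma benign_sub m c (i : 'I_m) :
  subseq [seq l <- benign m c | l != i] [seq j <- enum 'I_m | j != i].
Proof.
rewrite /benign -filter_predI.
rewrite (eq_filter (a2 := predI (fun x : 'I_m => (c <= x)%N) (fun x => x != i))); last first.
  by move=> x /=; rewrite andbC.
by rewrite filter_predI; exact: filter_subseq.
Qed.

Theorem theorem1 (R : realType) (m c d : nat)
  (hm : (0 < m)%N) (hc : (0 < c)%N) (hd : (0 < d)%N) (hmc : (2 * c + 1 < m)%N)
  (w : 'I_m -> 'rV[R]_d) (wRe s : 'rV[R]_d)
  (hs : forall k : 'I_d, s 0 k = 1 \/ s 0 k = -1)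
  (lam : R) (hsol : krum_opt_solution c w wRe s lam) :
  lam <=
    Num.sqrt ((((m - 2 * c - 1) * d)%:R)^-1 *
              seqmin [seq benign_nbr_sum c w i | i <- benign m c])
    + (Num.sqrt d%:R)^-1 * seqmax [seq edist (w i) wRe | i <- benign m c].
Proof.
move: hsol => [[lam0 hsel] _].
have cm : (c <= m)%N by lia.
pose i0 : 'I_m := Ordinal hm.
have hsel0 := hsel i0 erefl.
set v := attacked_models c w wRe s lam in hsel0.
set M := seqmax _.
set X := seqmin _.
set q := Num.sqrt d%:R.
have qpos : 0 < q by rewrite sqrtr_gt0 ltr0n.
have cm1 : (c < m)%N by lia.
have jb : Ordinal cm1 \in benign m c by rewrite mem_filter mem_enum /= leqnn.
have bne : [seq benign_nbr_sum c w i | i <- benign m c] != [::].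
  by case: (benign m c) jb.
rewrite -(ler_pM2r qpos) mulrDl [q^-1 * M * q]mulrAC mulVf ?mul1r; last by rewrite gt_eqF.
case: (leP (lam * q) M) => hL.
  apply: le_trans hL _; rewrite lerDr; apply: mulr_ge0; [exact: sqrtr_ge0 | exact: ltW].
set L := lam * q in hL *.
set t := L - M.
have [istar ib hX] : exists2 i, i \in benign m c & X = benign_nbr_sum c w i.
  by apply/mapP; apply: seqmin_in.
have cis : (c <= istar)%N by move: ib; rewrite mem_filter => /andP[].
have Mge : forall j : 'I_m, (c <= j)%N -> edist (w j) wRe <= M.
  by move=> j cj; apply: seqmax_ge; apply: map_f; rewrite mem_filter mem_enum cj.
have H1 := hsel0 istar.
have H2 : krum_score c v istar <= benign_nbr_sum c w istar.
  rewrite /krum_score /benign_nbr_sum.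
  apply: sum_smallest_subseq.
    have -> : [seq edist (w l) (w istar) ^+ 2 | l <- [seq l <- benign m c | l != istar]] =
        [seq edist (v istar) (v j) ^+ 2 | j <- [seq l <- benign m c | l != istar]].
      apply/eq_in_map => l; rewrite mem_filter /benign mem_filter => /and3P[_ cl _].
      by rewrite /v /attacked_models !ltnNge cl cis /= edistC.
    exact/map_subseq/benign_sub.
  by rewrite size_map; apply: (leq_trans _ (@size_benign_nbr m c istar cm)); lia.
have H3 : ((m - c - 2 - (c - 1))%N)%:R * t ^+ 2 <= krum_score c v i0.
  rewrite /krum_score; apply: sum_smallest_lb.
  - exact: sqr_ge0.
  - by apply/allP => x /mapP [j _ ->]; exact: sqr_ge0.
  - rewrite count_map; apply: (leq_trans _ (@count_crafted m c i0 erefl cm)).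
    apply: sub_count => j /=.
    rewrite ltnNge; apply: contraTN => cj; rewrite -leNgt.
    have vi0 : v i0 = wRe - lam *: s by rewrite /v /attacked_models /= hc.
    have vj : v j = w j by rewrite /v /attacked_models ltnNge cj.
    rewrite vi0 vj; apply: le_trans (@dist_lb R d wRe (w j) s lam hs (ltW lam0)).
    have D0 := sqrtr_ge0 (\sum_(k < d) (w j 0 k - wRe 0 k) ^+ 2).
    have DM := Mge j cj.
    rewrite /t -/q -/L; move: DM D0; rewrite /edist.
    move: (Num.sqrt _) => D DM D0; nra.
  - rewrite size_map; apply: (leq_trans _ (size_subseq (@benign_sub m c i0))).
    by apply: (leq_trans _ (@size_benign_nbr m c i0 cm)); lia.
have Ek : (m - c - 2 - (c - 1) = m - 2 * c - 1)%N by lia.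
rewrite Ek in H3.
set K := (m - 2 * c - 1)%N in H3 *.
have Kpos : (0 : R) < K%:R by rewrite ltr0n /K; lia.
have tpos : 0 < t by rewrite /t subr_gt0.
have KX : K%:R * t ^+ 2 <= X by rewrite hX; apply: le_trans H2; apply: le_trans H1.
have X0 : 0 <= X by apply: le_trans KX; apply: mulr_ge0; [exact: ltW | exact: sqr_ge0].
have -> : Num.sqrt ((K * d)%:R^-1 * X) * q = Num.sqrt (X / K%:R).
  rewrite /q -sqrtrM; last by apply: mulr_ge0 => //; rewrite invr_ge0.
  congr Num.sqrt; rewrite natrM invfM; field.
  by apply/andP; split; rewrite pnatr_eq0 -lt0n //; lia.
have tle : t <= Num.sqrt (X / K%:R).
  rewrite -(ger0_norm (ltW tpos)) -sqrtr_sqr; apply: ler_wsqrtr.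
  by rewrite ler_pdivlMr // mulrC.
by move: tle; rewrite /t; lra.
Qed.
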